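(* Let $\mathcal H$ be a connected graded Hopf algebra over a field $\mathbb K$ of characteristic zero, $\alpha:\mathcal H_1\to\mathbb K$ a nonzero linear map and $q=q_\alpha$ the associated inverse-factorial character. Then for all $h,k\in\mathbb K$ and every homogeneous $x\in\mathcal H$, $$q(x)\,(h+k)^{|x|}=\sum_{(x)}q(x_1)\,q(x_2)\,h^{|x_1|}k^{|x_2|},$$ where $\Delta(x)=\sum_{(x)}x_1\otimes x_2$ is written with homogeneous $x_1,x_2$.
   Context: A connected graded Hopf algebra is $\mathcal H=\bigoplus_{n\ge0}\mathcal H_n$ with $\mathcal H_0=\mathbb K\mathbf 1$, product and coproduct $\Delta$ respecting the grading; $|x|$ is the degree of a homogeneous $x$. The reduced coproduct is $\Delta'(x)=\Delta(x)-x\otimes\mathbf 1-\mathbf 1\otimes x=\sum'_{(x)}x'\otimes x''$ (homogeneous components). The inverse-factorial character $q_\alpha$ is the linear form on $\mathcal H$ determined by $q_\alpha(\mathbf 1)=1$, $q_\alpha|_{\mathcal H_1}=\alpha$, and for homogeneous $x$ with $|x|\ge2$: $q_\alpha(x)=\frac{1}{2^{|x|}-2}\sum'_{(x)}q_\alpha(x')q_\alpha(x'')$. *)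

(* Defs.v *)
From HB Require Import structures.
From mathcomp Require Import all_boot all_order all_algebra.
Set Implicit Arguments. Unset Strict Implicit. Unset Printing Implicit Defensive.
Import Order.TTheory GRing.Theory Num.Theory.
Local Open Scope ring_scope.

(* Encoding conventions:
   - the grading H = (+)_n H_n is given by projections pi n : H -> H;
   - an element of H (x) H is represented by a finite list of pairs
     (a_i, b_i), standing for sum_i a_i (x) b_i;  two lists represent the same
     tensor iff they agree on all f (x) g with f, g linear forms on H
     (linear forms separate points of H (x) H);
   - cop x is a chosen representative of Delta(x). *)

Section Defs.
Variables (K : fieldType) (H : algType K).

Definition lin_form (f : H -> K) : Prop :=
  forall (a : K) (x y : H), f (a *: x + y) = a * f x + f y.

Definition lin_map (f : H -> H) : Prop :=
  forall (a : K) (x y : H), f (a *: x + y) = a *: f x + f y.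

Definition teval2 (f g : H -> K) (s : seq (H * H)) : K :=
  \sum_(p <- s) f p.1 * g p.2.

Definition teq2 (s t : seq (H * H)) : Prop :=
  forall f g, lin_form f -> lin_form g -> teval2 f g s = teval2 f g t.

Definition homog (pi : nat -> H -> H) (n : nat) (x : H) : Prop := pi n x = x.

Record is_cgHopf (pi : nat -> H -> H) (cop : H -> seq (H * H))
    (eps : H -> K) (S : H -> H) : Prop := {
  pi_lin : forall n, lin_map (pi n);
  pi_orth : forall n m x, pi n (pi m x) = if n == m then pi n x else 0;
  pi_decomp : forall x, exists N, x = \sum_(n < N) pi n x;
  mul_graded : forall n m x y, homog pi n x -> homog pi m y ->
                 homog pi (n + m)%N (x * y);
  one_graded : homog pi 0 1;
  connected : forall x, homog pi 0 x -> exists c : K, x = c *: 1;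
  cop_lin : forall (a : K) x y,
      teq2 (cop (a *: x + y)) ([seq (a *: p.1, p.2) | p <- cop x] ++ cop y);
  cop_graded : forall n x, homog pi n x ->
      teq2 (cop x) [seq (pi i p.1, pi (n - i)%N p.2) | p <- cop x, i <- iota 0 n.+1];
  coassoc : forall x f g h, lin_form f -> lin_form g -> lin_form h ->
      \sum_(p <- cop x) (\sum_(r <- cop p.1) f r.1 * g r.2) * h p.2
      = \sum_(p <- cop x) f p.1 * (\sum_(r <- cop p.2) g r.1 * h r.2);
  cop_mul : forall x y,
      teq2 (cop (x * y)) [seq (p.1 * r.1, p.2 * r.2) | p <- cop x, r <- cop y];
  cop_one : teq2 (cop 1) [:: (1, 1)];
  eps_lin : lin_form eps;
  eps_graded : forall n x, (0 < n)%N -> homog pi n x -> eps x = 0;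
  counitl : forall x, \sum_(p <- cop x) eps p.1 *: p.2 = x;
  counitr : forall x, \sum_(p <- cop x) eps p.2 *: p.1 = x;
  eps_mul : forall x y, eps (x * y) = eps x * eps y;
  eps_one : eps 1 = 1;
  S_lin : lin_map S;
  antipodel : forall x, \sum_(p <- cop x) S p.1 * p.2 = eps x *: 1;
  antipoder : forall x, \sum_(p <- cop x) p.1 * S p.2 = eps x *: 1
}.

(* q is the inverse-factorial character q_alpha:
   q linear, q(1)=1, q = alpha on H_1, and for homogeneous x with |x| = n >= 2,
   q(x) = (2^n - 2)^-1 * (q (x) q)(Delta' x), where
   (q (x) q)(Delta' x) = (q (x) q)(Delta x) - q(x) q(1) - q(1) q(x). *)
Definition is_q_alpha (pi : nat -> H -> H) (cop : H -> seq (H * H))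
    (alpha q : H -> K) : Prop :=
  [/\ lin_form q, q 1 = 1,
      (forall x, homog pi 1 x -> q x = alpha x) &
      (forall n x, (2 <= n)%N -> homog pi n x ->
         q x = (2 ^+ n - 2 : K)^-1 *
               (\sum_(p <- cop x) q p.1 * q p.2 - q x * q 1 - q 1 * q x))].

End Defs.

(* Main.v *)
Require Import Defs.
From HB Require Import structures.
From mathcomp Require Import all_boot all_order all_algebra ring zify.
Import Order.TTheory GRing.Theory Num.Theory.
Local Open Scope ring_scope.
Set Implicit Arguments. Unset Strict Implicit.

Lemma lf0 (K : fieldType) (H : algType K) (f : H -> K) : lin_form f -> f 0 = 0.
Proof.
move=> Hf; have E := Hf 1 0 0; rewrite scale1r addr0 mul1r in E.
by apply: (@addrI _ (f 0)); rewrite addr0 -E.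
Qed.

Lemma lfD (K : fieldType) (H : algType K) (f : H -> K) x y :
  lin_form f -> f (x + y) = f x + f y.
Proof. by move=> Hf; have := Hf 1 x y; rewrite scale1r mul1r. Qed.

Lemma lfZ (K : fieldType) (H : algType K) (f : H -> K) a x :
  lin_form f -> f (a *: x) = a * f x.
Proof. by move=> Hf; have := Hf a x 0; rewrite !addr0 (lf0 Hf) addr0. Qed.

Lemma lf_sum (K : fieldType) (H : algType K) (f : H -> K) (I : Type) (r : seq I)
  (P : pred I) (F : I -> H) :
  lin_form f -> f (\sum_(i <- r | P i) F i) = \sum_(i <- r | P i) f (F i).
Proof.
move=> Hf; apply: (big_morph f (id1 := 0) (op1 := +%R)).
  by move=> x y; apply: lfD. by apply: lf0.
Qed.

Lemma lm0 (K : fieldType) (H : algType K) (f : H -> H) : lin_map f -> f 0 = 0.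
Proof.
move=> Hf; have E := Hf 1 0 0; rewrite scale1r addr0 scale1r in E.
by apply: (@addrI _ (f 0)); rewrite addr0 -E.
Qed.

Lemma lmD (K : fieldType) (H : algType K) (f : H -> H) x y :
  lin_map f -> f (x + y) = f x + f y.
Proof. by move=> Hf; have := Hf 1 x y; rewrite !scale1r. Qed.

Lemma lm_sum (K : fieldType) (H : algType K) (f : H -> H) (I : Type) (r : seq I)
  (P : pred I) (F : I -> H) :
  lin_map f -> f (\sum_(i <- r | P i) F i) = \sum_(i <- r | P i) f (F i).
Proof.
move=> Hf; apply: (big_morph f (id1 := 0) (op1 := +%R)).
  by move=> x y; apply: lmD. by apply: lm0.
Qed.

Lemma lf_comp (K : fieldType) (H : algType K) (f : H -> K) (g : H -> H) :
  lin_form f -> lin_map g -> lin_form (fun y => f (g y)).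
Proof. by move=> Hf Hg a x y; rewrite Hg Hf. Qed.

Lemma lf_lsum (K : fieldType) (H : algType K) (N : nat) (c : nat -> K)
  (F : nat -> H -> K) :
  (forall i, lin_form (F i)) -> lin_form (fun y => \sum_(i < N) c i * F i y).
Proof.
move=> HF a x y; rewrite mulr_sumr -big_split /=; apply: eq_bigr => i _.
by rewrite HF mulrDr mulrCA.
Qed.

Definition conv (K : fieldType) (H : algType K) (cop : H -> seq (H * H))
  (f g : H -> K) (y : H) : K := \sum_(p <- cop y) f p.1 * g p.2.

Lemma conv_ext (K : fieldType) (H : algType K) (cop : H -> seq (H * H)) f f' g g' y :
  (forall z, f z = f' z) -> (forall z, g z = g' z) -> conv cop f g y = conv cop f' g' y.
Proof. by move=> Ef Eg; apply: eq_bigr => p _; rewrite Ef Eg. Qed.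


Lemma conv_lin (K : fieldType) (H : algType K) pi cop (eps : H -> K) S f g :
  is_cgHopf pi cop eps S -> lin_form f -> lin_form g -> lin_form (conv cop f g).
Proof.
move=> HH Hf Hg a x y; rewrite /conv.
have := cop_lin HH a x y Hf Hg; rewrite /teval2 => ->.
rewrite big_cat big_map /= mulr_sumr; congr (_ + _); apply: eq_bigr => p _.
by rewrite lfZ // mulrA.
Qed.

Lemma conv_graded (K : fieldType) (H : algType K) pi cop (eps : H -> K) S f g n x :
  is_cgHopf pi cop eps S -> lin_form f -> lin_form g -> homog pi n x ->
  conv cop f g x = \sum_(i < n.+1)
     conv cop (fun y => f (pi i y)) (fun y => g (pi (n - i)%N y)) x.
Proof.
move=> HH Hf Hg Hx; rewrite /conv.
have := cop_graded HH Hx Hf Hg; rewrite /teval2 => ->.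
rewrite big_allpairs_dep /= exchange_big /=.
change (0%N :: iota 1 n) with (index_iota 0 n.+1).
by rewrite big_mkord.
Qed.

Lemma homog_pi (K : fieldType) (H : algType K) pi cop (eps : H -> K) S m z :
  is_cgHopf pi cop eps S -> homog pi m (pi m z).
Proof. by move=> HH; rewrite /homog (pi_orth HH) eqxx. Qed.

Lemma pi0_eps (K : fieldType) (H : algType K) pi cop (eps : H -> K) S f z :
  is_cgHopf pi cop eps S -> lin_form f -> f (pi 0%N z) = eps z * f 1.
Proof.
move=> HH Hf.
have [c Hc] := connected HH (homog_pi 0 z HH).
have [N HN] := pi_decomp HH z.
case: N HN => [|N] HN.
  rewrite big_ord0 in HN.
  by rewrite HN (lm0 (pi_lin HH 0)) (lf0 Hf) (lf0 (eps_lin HH)) mul0r.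
have -> : eps z = eps (\sum_(n < N.+1) pi n z) by rewrite -HN.
rewrite (lf_sum _ _ _ (eps_lin HH)) big_ord_recl big1 /=.
  by rewrite addr0 Hc (lfZ _ _ Hf) (lfZ _ _ (eps_lin HH)) (eps_one HH) mulr1.
by move=> i _; apply: (eps_graded HH _ (homog_pi _ _ HH)).
Qed.

Lemma lmZ (K : fieldType) (H : algType K) (f : H -> H) a x :
  lin_map f -> f (a *: x) = a *: f x.
Proof. by move=> Hf; have := Hf a x 0; rewrite !addr0 (lm0 Hf) addr0. Qed.

Definition Qf (K : fieldType) (H : algType K) (pi : nat -> H -> H) (q : H -> K)
  (i : nat) (y : H) : K := q (pi i y).

Lemma Qf_lin (K : fieldType) (H : algType K) pi cop (eps : H -> K) S q i :
  is_cgHopf pi cop eps S -> lin_form q -> lin_form (Qf pi q i).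
Proof. by move=> HH Hq; exact: (lf_comp Hq (pi_lin HH i)). Qed.

Lemma Qf_pi (K : fieldType) (H : algType K) pi cop (eps : H -> K) S q i l y :
  is_cgHopf pi cop eps S -> lin_form q ->
  Qf pi q i (pi l y) = if i == l then Qf pi q i y else 0.
Proof.
move=> HH Hq; rewrite /Qf (pi_orth HH); case: eqP => // _; exact: lf0.
Qed.

Lemma c_zero (K : fieldType) (H : algType K) pi cop (eps : H -> K) S q i j m z :
  is_cgHopf pi cop eps S -> lin_form q -> homog pi m z -> (i + j != m)%N ->
  conv cop (Qf pi q i) (Qf pi q j) z = 0.
Proof.
move=> HH Hq Hz Hne.
rewrite (conv_graded HH (Qf_lin i HH Hq) (Qf_lin j HH Hq) Hz).
apply: big1 => l _; rewrite /conv; apply: big1 => p _.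
rewrite !(Qf_pi _ _ _ HH Hq).
case: eqP => [eil|_]; last by rewrite mul0r.
case: eqP => [ejl|_]; last by rewrite mulr0.
have := ltn_ord l; rewrite ltnS => hl.
by move: Hne; rewrite eil ejl subnKC // eqxx.
Qed.

Lemma c_0n (K : fieldType) (H : algType K) pi cop (eps : H -> K) S q n x :
  is_cgHopf pi cop eps S -> lin_form q -> q 1 = 1 -> homog pi n x ->
  conv cop (Qf pi q 0) (Qf pi q n) x = q x.
Proof.
move=> HH Hq Hq1 Hx; rewrite /conv.
under eq_bigr => p _ do rewrite /Qf (pi0_eps _ HH Hq) Hq1 mulr1.
transitivity (q (pi n (\sum_(p <- cop x) eps p.1 *: p.2))); last first.
  by rewrite (counitl HH) Hx.
rewrite (lm_sum _ _ _ (pi_lin HH n)) (lf_sum _ _ _ Hq); apply: eq_bigr => p _.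
by rewrite (lmZ _ _ (pi_lin HH n)) (lfZ _ _ Hq).
Qed.

Lemma c_n0 (K : fieldType) (H : algType K) pi cop (eps : H -> K) S q n x :
  is_cgHopf pi cop eps S -> lin_form q -> q 1 = 1 -> homog pi n x ->
  conv cop (Qf pi q n) (Qf pi q 0) x = q x.
Proof.
move=> HH Hq Hq1 Hx; rewrite /conv.
under eq_bigr => p _ do rewrite [Qf _ _ 0 _]/Qf (pi0_eps _ HH Hq) Hq1 mulr1 mulrC.
transitivity (q (pi n (\sum_(p <- cop x) eps p.2 *: p.1))); last first.
  by rewrite (counitr HH) Hx.
rewrite (lm_sum _ _ _ (pi_lin HH n)) (lf_sum _ _ _ Hq); apply: eq_bigr => p _.
by rewrite (lmZ _ _ (pi_lin HH n)) (lfZ _ _ Hq).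
Qed.

Lemma G_lem (K : fieldType) (H : algType K) pi cop (eps : H -> K) S q m a y :
  is_cgHopf pi cop eps S -> lin_form q ->
  (forall z, homog pi m z -> forall a, (a <= m)%N ->
     conv cop (Qf pi q a) (Qf pi q (m - a)) z = 'C(m, a)%:R * q z) ->
  (a <= m)%N ->
  conv cop (Qf pi q a) (Qf pi q (m - a)) y = 'C(m, a)%:R * Qf pi q m y.
Proof.
move=> HH Hq Pm Ha.
have [N HN] := pi_decomp HH y.
have -> : conv cop (Qf pi q a) (Qf pi q (m - a)) y =
          conv cop (Qf pi q a) (Qf pi q (m - a)) (\sum_(l < N) pi l y) by rewrite -HN.
have -> : Qf pi q m y = Qf pi q m (\sum_(l < N) pi l y) by rewrite -HN.
rewrite (lf_sum _ _ _ (conv_lin HH (Qf_lin a HH Hq) (Qf_lin (m - a) HH Hq))).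
rewrite (lf_sum _ _ _ (Qf_lin m HH Hq)) mulr_sumr; apply: eq_bigr => l _.
case: (eqVneq (nat_of_ord l) m) => [El|ne].
  rewrite El (Pm _ (homog_pi _ _ HH)) //.
  by rewrite /Qf (pi_orth HH) eqxx.
rewrite (c_zero HH Hq (homog_pi _ _ HH)); last by rewrite subnKC // eq_sym.
by rewrite (Qf_pi _ _ _ HH Hq) eq_sym (negbTE ne) mulr0.
Qed.

Lemma sum_ends (K : fieldType) (m : nat) (F : nat -> K) :
  (forall i, (0 < i)%N -> (i < m.+2)%N -> F i = 0) ->
  \sum_(i < m.+3) F i = F 0%N + F m.+2.
Proof.
move=> HF; rewrite big_ord_recl big_ord_recr /= big1 ?add0r //.
move=> i _; apply: HF => //; rewrite /bump /= add1n ltnS; exact: ltn_ord.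
Qed.

Lemma sum_bin (K : fieldType) (n : nat) :
  \sum_(i < n.+1) ('C(n, i)%:R : K) = 2 ^+ n.
Proof.
have -> : (2 : K) = 1 + 1 by [].
rewrite exprDn; apply: eq_bigr => i _; by rewrite !expr1n mul1r.
Qed.

Lemma sum_ends2 (K : fieldType) (n : nat) (F : nat -> K) : (2 <= n)%N ->
  (forall i, (0 < i)%N -> (i < n)%N -> F i = 0) ->
  \sum_(i < n.+1) F i = F 0%N + F n.
Proof. by case: n => [|[|m]] // _; apply: sum_ends. Qed.

Lemma main_ind (K : fieldType) (H : algType K) pi cop (eps : H -> K) S q n x :
  [pchar K] =i pred0 -> is_cgHopf pi cop eps S -> lin_form q -> q 1 = 1 ->
  (forall n x, (2 <= n)%N -> homog pi n x ->
         q x = (2 ^+ n - 2 : K)^-1 *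
               (\sum_(p <- cop x) q p.1 * q p.2 - q x * q 1 - q 1 * q x)) ->
  homog pi n x -> forall a, (a <= n)%N ->
  conv cop (Qf pi q a) (Qf pi q (n - a)) x = 'C(n, a)%:R * q x.
Proof.
move=> Hc HH Hq Hq1 Hrec.
have nz : forall k, (0 < k)%N -> (k%:R : K) != 0.
  by move=> k hk; rewrite ((pcharf0P K).1 Hc) -lt0n.
elim/ltn_ind: n x => n IH x Hx a Ha.
case: (posnP a) => [->|a0]; first by rewrite subn0 (c_0n HH) // bin0 mul1r.
case: (eqVneq a n) => [->|an]; first by rewrite subnn (c_n0 HH) // binn mul1r.
have an' : (a < n)%N by rewrite ltn_neqAle an.
have n2 : (2 <= n)%N by apply: (leq_ltn_trans _ an').
pose c i := conv cop (Qf pi q i) (Qf pi q (n - i)) x.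
have KEY : forall b, (0 < b)%N -> (b < n)%N ->
    b%:R * c b = 'C(n.-1, b.-1)%:R * c 1%N.
  move=> b b0 bn.
  have E : \sum_(p <- cop x) conv cop (Qf pi q 1) (Qf pi q b.-1) p.1 * Qf pi q (n - b) p.2
         = \sum_(p <- cop x) Qf pi q 1 p.1 * conv cop (Qf pi q b.-1) (Qf pi q (n - b)) p.2
    := coassoc HH x (Qf_lin 1 HH Hq) (Qf_lin b.-1 HH Hq) (Qf_lin (n - b) HH Hq).
  have G1 : forall y, conv cop (Qf pi q 1) (Qf pi q b.-1) y = 'C(b, 1)%:R * Qf pi q b y.
    move=> y; rewrite -subn1; apply: (G_lem y HH Hq) => //; exact: IH.
  have G2 : forall y, conv cop (Qf pi q b.-1) (Qf pi q (n - b)) y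
        = 'C(n.-1, b.-1)%:R * Qf pi q n.-1 y.
    move=> y; have -> : (n - b = n.-1 - b.-1)%N.
      by move: b0 bn; clear; lia.
    apply: (G_lem y HH Hq) => //; last by rewrite -!subn1 leq_sub2r // ltnW.
    apply: IH; by rewrite prednK ?ltnSn // (ltn_trans b0).
  transitivity (\sum_(p <- cop x) conv cop (Qf pi q 1) (Qf pi q b.-1) p.1 * Qf pi q (n - b) p.2).
    rewrite /c [conv _ _ _ x]/conv mulr_sumr; apply: eq_bigr => p _.
    by rewrite G1 bin1 -mulrA.
  rewrite E /c [conv _ _ _ x]/conv mulr_sumr; apply: eq_bigr => p _.
  by rewrite G2 subn1 mulrCA.
have D : forall b, (0 < b)%N -> (b < n)%N ->
    n%:R * c b = 'C(n, b)%:R * c 1%N.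
  move=> b b0 bn; apply: (@mulfI _ (b%:R) (nz b b0)).
  rewrite mulrCA KEY // mulrA -natrM mul_bin_diag prednK // natrM -mulrA.
  by rewrite mulrCA.
have c0 : c 0%N = q x by rewrite /c subn0 (c_0n HH).
have cn : c n = q x by rewrite /c subnn (c_n0 HH).
have ET : \sum_(i < n.+1) c i = 2 ^+ n * q x.
  have z0 : (2 ^+ n - 2 : K) != 0.
    rewrite -natrX -natrB; last by rewrite -{1}(expn1 2) leq_exp2l // ltnW.
    apply: nz; rewrite subn_gt0 -{1}(expn1 2) ltn_exp2l //.
  have Er := Hrec n x n2 Hx.
  have : \sum_(p <- cop x) q p.1 * q p.2 = \sum_(i < n.+1) c i.
    exact: (conv_graded HH Hq Hq Hx).
  move=> ES; rewrite ES Hq1 mulr1 mul1r in Er.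
  have Er2 := congr1 (fun t => (2 ^+ n - 2 : K) * t) Er.
  rewrite /= mulrA mulfV // mul1r in Er2.
  have -> : \sum_(i < n.+1) c i = (2 ^+ n - 2) * q x + q x + q x by rewrite Er2; ring.
  ring.
have EQ : \sum_(i < n.+1) (n%:R * c i - 'C(n, i)%:R * c 1%N)
          = (n%:R * q x - c 1%N) + (n%:R * q x - c 1%N).
  rewrite (sum_ends2 (F := fun i => n%:R * c i - 'C(n, i)%:R * c 1%N)) //; last first.
    by move=> i i0 iN; rewrite D // subrr.
  by rewrite c0 cn bin0 binn mul1r.
rewrite sumrB -mulr_sumr -mulr_suml sum_bin ET in EQ.
have c1 : c 1%N = n%:R * q x.
  have z0 : (2 ^+ n - 2 : K) != 0.
    rewrite -natrX -natrB; last by rewrite -{1}(expn1 2) leq_exp2l // ltnW.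
    apply: nz; rewrite subn_gt0 -{1}(expn1 2) ltn_exp2l //.
  have : (2 ^+ n - 2 : K) * (n%:R * q x - c 1%N) = 0.
    transitivity ((n%:R * (2 ^+ n * q x) - 2 ^+ n * c 1%N)
                  - ((n%:R * q x - c 1%N) + (n%:R * q x - c 1%N))); first by ring.
    by rewrite EQ subrr.
  move/eqP; rewrite mulf_eq0 (negbTE z0) /= subr_eq0 => /eqP.
  by move=> ->.
apply: (@mulfI _ (n%:R) (nz n (ltnW n2))).
rewrite -/(c a) D // c1 mulrCA.
by [].
Qed.

Theorem mainTheorem2 (K : fieldType) (H : algType K)
    (pi : nat -> H -> H) (cop : H -> seq (H * H)) (eps : H -> K) (S : H -> H) :
  [pchar K] =i pred0 ->
  is_cgHopf pi cop eps S ->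
  forall alpha : H -> K, lin_form alpha ->
  (exists x, homog pi 1 x /\ alpha x != 0) ->
  forall q : H -> K, is_q_alpha pi cop alpha q ->
  forall (h k : K) (n : nat) (x : H), homog pi n x ->
  forall s : seq ((H * nat) * (H * nat)),
    (forall p, p \in s -> homog pi p.1.2 p.1.1 /\ homog pi p.2.2 p.2.1) ->
    teq2 (cop x) [seq (p.1.1, p.2.1) | p <- s] ->
    q x * (h + k) ^+ n = \sum_(p <- s) q p.1.1 * q p.2.1 * h ^+ p.1.2 * k ^+ p.2.2.
Proof.
move=> Hc HH alpha _ _ q [Hq Hq1 _ Hrec] h k n x Hx s Hs Hteq.
pose M := (\max_(p <- s) (p.1.2 + p.2.2))%N.
pose N := (n + M).+1.
pose f := fun y => \sum_(i < N) h ^+ i * Qf pi q i y.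
pose g := fun y => \sum_(i < N) k ^+ i * Qf pi q i y.
have Hf : lin_form f by apply: lf_lsum => i; apply: (Qf_lin i HH Hq).
have Hg : lin_form g by apply: lf_lsum => i; apply: (Qf_lin i HH Hq).
have hom : forall (t : K) d y, homog pi d y -> (d < N)%N ->
    \sum_(i < N) t ^+ i * Qf pi q i y = t ^+ d * q y.
  move=> t d y Hy dN.
  transitivity (\sum_(i < N) t ^+ i * Qf pi q i (pi d y)); first by rewrite Hy.
  rewrite (bigD1 (Ordinal dN)) //= big1 ?addr0.
    by rewrite (Qf_pi _ _ _ HH Hq) eqxx /Qf Hy.
  move=> j ne; rewrite (Qf_pi _ _ _ HH Hq); case: eqP => E; last by rewrite mulr0.
  by move: ne; rewrite -(inj_eq val_inj) /= E eqxx.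
have -> : \sum_(p <- s) q p.1.1 * q p.2.1 * h ^+ p.1.2 * k ^+ p.2.2
        = \sum_(p <- s) f p.1.1 * g p.2.1.
  apply: eq_big_seq => p ps; have [H1 H2] := Hs p ps.
  have hm : (p.1.2 + p.2.2 <= M)%N.
    exact: (leq_bigmax_seq (F := fun p => (p.1.2 + p.2.2)%N) p ps isT).
  rewrite /f /g (hom h _ _ H1); last by rewrite /N; lia.
  rewrite (hom k _ _ H2); last by rewrite /N; lia.
  ring.
transitivity (teval2 f g (cop x)); last by rewrite (Hteq f g Hf Hg) /teval2 big_map.
change (teval2 f g (cop x)) with (conv cop f g x).
rewrite (conv_graded HH Hf Hg Hx) addrC exprDn mulr_sumr.
apply: eq_bigr => l _.
have lN : (l < N)%N by rewrite /N; have := ltn_ord l; lia.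
have nlN : (n - l < N)%N by rewrite /N; lia.
rewrite (@conv_ext K H cop _ (fun y => h ^+ l * Qf pi q l y) _
                  (fun y => k ^+ (n - l) * Qf pi q (n - l) y)); last first.
- by move=> z; rewrite /g (hom k _ _ (homog_pi _ _ HH) nlN).
- by move=> z; rewrite /f (hom h _ _ (homog_pi _ _ HH) lN).
have -> : conv cop (fun y => h ^+ l * Qf pi q l y) (fun y => k ^+ (n - l) * Qf pi q (n - l) y) x
        = h ^+ l * k ^+ (n - l) * conv cop (Qf pi q l) (Qf pi q (n - l)) x.
  rewrite /conv mulr_sumr; apply: eq_bigr => p _; by rewrite mulrACA.
rewrite (main_ind Hc HH Hq Hq1 Hrec Hx) ?(ltnSE (ltn_ord l)) //.
by rewrite -mulr_natr; ring.
Qed.
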